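(* Let $G$ be a row stratified grid-labelled graph of type $(a,b)$, and for $1\le i<a$ let $S_i$ be the grid-labelled graph of type $(a,b)$ whose edges are the diagonal edges of $G$ with one endpoint in row $i$ and the other in row $i+1$. If $G$ satisfies the degree criterion, then each $S_i$ satisfies the degree criterion. The analogous statement holds for column stratified graphs, with $S_j$ ($1\le j<b$) consisting of the diagonal edges between columns $j$ and $j+1$.
   Context: A grid-labelled graph of type $(a,b)$ is a simple graph whose vertex set is the grid $[a]\times[b]$. An edge $\{(i,j),(k,l)\}$ is diagonal if $i\neq k$ and $j\neq l$. $G$ is row stratified if every diagonal edge $\{(i,j),(k,l)\}$ satisfies $|i-k|=1$, and column stratified if every diagonal edge satisfies $|j-l|=1$. The partial transpose $\Gamma(G)$ is the grid-labelled graph with edge set $\{\{(k,j),(i,l)\}:\{(i,j),(k,l)\}\in E(G)\}$; $G$ satisfies the degree criterion if every vertex has the same degree in $G$ and in $\Gamma(G)$. *)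

(* Defs.v *)
From mathcomp Require Import all_boot.
Set Implicit Arguments. Unset Strict Implicit. Unset Printing Implicit Defensive.

(* Vertices of a grid-labelled graph of type (a,b): the grid [a] x [b],
   with rows/columns indexed 0-based by 'I_a and 'I_b (row r here is row r+1
   in the paper). *)
Definition grid (a b : nat) : finType := ('I_a * 'I_b)%type.

Definition simple_graph (a b : nat) (e : rel (grid a b)) : Prop :=
  symmetric e /\ irreflexive e.

Definition diagonal (a b : nat) (x y : grid a b) : bool :=
  (x.1 != y.1) && (x.2 != y.2).

Definition row_stratified (a b : nat) (e : rel (grid a b)) : Prop :=
  forall x y, e x y -> diagonal x y ->
    ((x.1 : nat) == (y.1 : nat).+1) || ((y.1 : nat) == (x.1 : nat).+1).

Definition col_stratified (a b : nat) (e : rel (grid a b)) : Prop :=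
  forall x y, e x y -> diagonal x y ->
    ((x.2 : nat) == (y.2 : nat).+1) || ((y.2 : nat) == (x.2 : nat).+1).

(* Partial transpose: {(k,j),(i,l)} is an edge iff {(i,j),(k,l)} is an edge of G.
   For x = (k,j), y = (i,l): e (i,j) (k,l). *)
Definition partial_transpose (a b : nat) (e : rel (grid a b)) : rel (grid a b) :=
  fun x y => e (y.1, x.2) (x.1, y.2).

Definition degree (a b : nat) (e : rel (grid a b)) (v : grid a b) : nat :=
  #|[pred w | e v w]|.

Definition degree_criterion (a b : nat) (e : rel (grid a b)) : Prop :=
  forall v, degree e v = degree (partial_transpose e) v.

Definition row_strip (a b : nat) (e : rel (grid a b)) (i : nat) : rel (grid a b) :=
  fun x y => [&& e x y, diagonal x y &
     (((x.1 : nat) == i) && ((y.1 : nat) == i.+1)) ||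
     (((y.1 : nat) == i) && ((x.1 : nat) == i.+1))].

Definition col_strip (a b : nat) (e : rel (grid a b)) (j : nat) : rel (grid a b) :=
  fun x y => [&& e x y, diagonal x y &
     (((x.2 : nat) == j) && ((y.2 : nat) == j.+1)) ||
     (((y.2 : nat) == j) && ((x.2 : nat) == j.+1))].

(* Main.v *)
Require Import Defs.
From mathcomp Require Import all_boot zify.

Ltac glia := repeat match goal with H : context [@nat_of_ord _ _] |- _ => revert H end;
  repeat match goal with |- context [@nat_of_ord ?k ?x] => let n := fresh "n" in move: (@nat_of_ord k x) => n end;
  intros; lia.

Section Row.
Variables (a b : nat).
Implicit Types (f : rel (grid a b)) (v w : grid a b).

Lemma card_split (P Q : pred (grid a b)) :
  #|[pred w | P w]| = #|[pred w | P w && Q w]| + #|[pred w | P w && ~~ Q w]|.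
Proof.
rewrite -(cardID Q [pred w | P w]); apply: f_equal2; apply: eq_card => w;
rewrite !inE /in_mem /= ?(andbC (~~ _)) //.
Qed.

Lemma colcard (r : 'I_a) (P : pred 'I_b) :
  #|[pred w : grid a b | ((w.1 : nat) == r) && P w.2]| = #|[pred l | P l]|.
Proof.
have inj : injective (fun l : 'I_b => ((r, l) : grid a b)) by move=> x y [].
rewrite -(card_image inj); apply: eq_card => w.
apply/idP/imageP => [|[l Hl ->]]; last by rewrite inE /= eqxx.
case: w => [x y]; rewrite inE /= => /andP [/eqP Hx Hy].
exists y => //; congr pair; exact: val_inj.
Qed.

Definition hc f v := #|[pred w | f v w && ((w.1 : nat) == v.1)]|.
Definition vc f v := #|[pred w | f v w && ((w.1 : nat) != v.1) && ((w.2 : nat) == v.2)]|.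
Definition dn f v := #|[pred w | f v w && ((w.2 : nat) != v.2) && ((w.1 : nat) == (v.1 : nat).+1)]|.
Definition up f v := #|[pred w | f v w && ((w.2 : nat) != v.2) && ((v.1 : nat) == (w.1 : nat).+1)]|.

Definition strat f := forall v w, f v w -> (w.1 : nat) != v.1 -> (w.2 : nat) != v.2 ->
   ((w.1 : nat) == (v.1 : nat).+1) || ((v.1 : nat) == (w.1 : nat).+1).

Lemma decomp f v : strat f -> degree f v = hc f v + vc f v + dn f v + up f v.
Proof.
move=> Hs; rewrite /degree (card_split _ (fun w => (w.1 : nat) == v.1)) -!addnA.
congr (_ + _).
rewrite (card_split _ (fun w => (w.2 : nat) == v.2)).
congr (_ + _).
rewrite (card_split _ (fun w => (w.1 : nat) == (v.1 : nat).+1)).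
congr (_ + _); apply: eq_card => w; rewrite !inE.
  case: (f v w) => //=; glia.
case E: (f v w) => //=.
have := Hs v w E.
case: ((w.1 : nat) == v.1) / eqP => /= H1; first glia.
case: ((w.2 : nat) == v.2) / eqP => /= H2; first glia.
move/(_ isT isT); glia.
Qed.

Definition sc f (i : nat) v := #|[pred w | f v w && ((w.1 : nat) != v.1) && ((w.2 : nat) != v.2) &&
   ((((v.1 : nat) == i) && ((w.1 : nat) == i.+1)) || (((w.1 : nat) == i) && ((v.1 : nat) == i.+1)))]|.

Lemma sc_eq f (i : nat) v : sc f i v =
  if (v.1 : nat) == i then dn f v else if (v.1 : nat) == i.+1 then up f v else 0.
Proof.
rewrite /sc /dn /up.
case: ((v.1 : nat) == i) / eqP => H1.
  apply: eq_card => w; rewrite !inE; case: (f v w) => //=; glia.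
case: ((v.1 : nat) == i.+1) / eqP => H2 /=.
  apply: eq_card => w; rewrite !inE; case: (f v w) => //=; glia.
apply: eq_card0 => w; rewrite !inE; case: (f v w) => //=; glia.
Qed.

Variable e : rel (grid a b).
Hypothesis Hsym : symmetric e.
Notation G := (partial_transpose e).

Lemma hc_G v : hc G v = hc e v.
Proof.
apply: eq_card => w; rewrite !inE /partial_transpose.
case: ((w.1 : nat) == v.1) / eqP; rewrite ?andbF ?andbT // => H.
by case: w H => [w1 w2] /= /val_inj ->; case: v.
Qed.

Lemma vc_G v : vc G v = vc e v.
Proof.
apply: eq_card => w; rewrite !inE /partial_transpose.
case: ((w.2 : nat) == v.2) / eqP; rewrite ?andbF ?andbT // => H.
by rewrite Hsym; case: w H => [w1 w2] /= /val_inj ->; case: v.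
Qed.

Lemma strat_e : row_stratified e -> strat e.
Proof.
move=> Hr v w H1 H2 H3; have := Hr v w H1; rewrite /diagonal -!val_eqE /=.
rewrite eq_sym H2 eq_sym H3 orbC => /(_ isT) //.
Qed.

Lemma strat_G : row_stratified e -> strat G.
Proof.
move=> Hr v w H1 H2 H3; have := Hr _ _ H1; rewrite /diagonal /=.
rewrite -!val_eqE /= H2 eq_sym H3 => /(_ isT); glia.
Qed.

Lemma nat_eq_ord n (x y : 'I_n) : ((x : nat) == y) = (x == y).
Proof. by []. Qed.

Lemma cross1 (v v' : grid a b) : (v'.1 : nat) = (v.1 : nat).+1 -> v'.2 = v.2 ->
  up e v' = dn G v.
Proof.
move=> H1 H2; rewrite /up /dn.
transitivity #|[pred w : grid a b | ((w.1 : nat) == v.1) && ((w.2 != v.2) && e v' (v.1, w.2))]|.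
  apply: eq_card => -[w1 w2]; rewrite !inE /= H1 H2 eqSS [(v.1 : nat) == _]eq_sym !nat_eq_ord.
  case: (eqVneq w1 v.1) => [->|_]; last by rewrite !andbF.
  by rewrite andbT andbC.
rewrite (colcard v.1 (fun l => (l != v.2) && e v' (v.1, l))).
transitivity #|[pred w : grid a b | ((w.1 : nat) == v'.1) && ((w.2 != v.2) && e v' (v.1, w.2))]|.
  by rewrite (colcard v'.1 (fun l => (l != v.2) && e v' (v.1, l))).
apply: eq_card => -[w1 w2]; rewrite !inE /partial_transpose /= H1.
case: (eqVneq (w1 : nat) (v.1 : nat).+1) => [E|]; last by rewrite !andbF.
have -> : w1 = v'.1 by apply: val_inj; rewrite /= E H1.
by rewrite -H2 andbT /= andbC; case: v' {H1 H2 E}.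
Qed.

Lemma cross2 (v v' : grid a b) : (v'.1 : nat) = (v.1 : nat).+1 -> v'.2 = v.2 ->
  up G v' = dn e v.
Proof.
move=> H1 H2; rewrite /up /dn.
transitivity #|[pred w : grid a b | ((w.1 : nat) == v.1) && ((w.2 != v.2) && e v (v'.1, w.2))]|.
  apply: eq_card => -[w1 w2]; rewrite !inE /partial_transpose /= H1 H2 eqSS [(v.1 : nat) == _]eq_sym.
  case: (eqVneq (w1 : nat) v.1) => [E|]; last by rewrite !andbF.
  have -> : w1 = v.1 by apply: val_inj.
  by rewrite andbT /= andbC; case: v {H1 H2 E}.
rewrite (colcard v.1 (fun l => (l != v.2) && e v (v'.1, l))).
transitivity #|[pred w : grid a b | ((w.1 : nat) == v'.1) && ((w.2 != v.2) && e v (v'.1, w.2))]|.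
  by rewrite (colcard v'.1 (fun l => (l != v.2) && e v (v'.1, l))).
apply: eq_card => -[w1 w2]; rewrite !inE /= H1.
case: (eqVneq (w1 : nat) (v.1 : nat).+1) => [E|]; last by rewrite !andbF.
have -> : w1 = v'.1 by apply: val_inj; rewrite /= E H1.
by rewrite andbT /= andbC.
Qed.

Lemma up0 f v : (v.1 : nat) = 0 -> up f v = 0.
Proof. move=> H; apply: eq_card0 => w; rewrite !inE H; case: (f v w) => //=; glia. Qed.

Lemma row_main : row_stratified e -> degree_criterion e ->
  forall v, up e v = up G v /\ dn e v = dn G v.
Proof.
move=> Hr Hd.
have key : forall v, up e v = up G v -> dn e v = dn G v.
  move=> v Hu; have := Hd v; rewrite /degree.
  rewrite -[#|_|]/(degree e v) -[#|[pred w | G v w]|]/(degree G v).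
  rewrite (decomp e v (strat_e Hr)) (decomp G v (strat_G Hr)) hc_G vc_G Hu; glia.
suff H : forall n v, (v.1 : nat) = n -> up e v = up G v.
  by move=> v; split; [|apply: key]; apply: (H _ v erefl).
elim=> [|n IH] v Hv; first by rewrite !up0.
have Hn : n < a by have := ltn_ord v.1; rewrite Hv; glia.
pose u : grid a b := (Ordinal Hn, v.2).
rewrite (cross1 u v) // (cross2 u v) //.
by rewrite (key u (IH u erefl)).
Qed.

Lemma row_thm : row_stratified e -> degree_criterion e ->
  forall i, degree_criterion (row_strip e i).
Proof.
move=> Hr Hd i v.
have [Hu Hdn] := row_main Hr Hd v.
transitivity (sc e i v).
  apply: eq_card => w; rewrite !inE /row_strip /diagonal -!val_eqE.
  case: (e v w) => //=; glia.
transitivity (sc G i v); last first.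
  apply: eq_card => w; rewrite !inE /row_strip /partial_transpose /diagonal -!val_eqE /=.
  case: (e _ _) => //=; glia.
by rewrite !sc_eq Hu Hdn.
Qed.

End Row.

Set Implicit Arguments. Unset Strict Implicit.
Definition swp a b (x : grid a b) : grid b a := (x.2, x.1).
Definition tr a b (f : rel (grid a b)) : rel (grid b a) := fun x y => f (swp x) (swp y).

Lemma swpK a b (x : grid a b) : swp (swp x) = x.
Proof. by case: x. Qed.

Lemma card_swap a b (P : pred (grid a b)) :
  #|[pred x : grid b a | P (swp x)]| = #|[pred y | P y]|.
Proof.
have inj : injective (@swp b a) by move=> x y H; rewrite -(swpK x) H swpK.
rewrite -(card_image inj); apply: eq_card => y.
apply/imageP/idP => [[x Hx ->] //|Hy].
by exists (swp y); rewrite ?inE swpK //; rewrite inE in Hy.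
Qed.

Lemma deg_tr a b (f : rel (grid a b)) v : degree (tr f) v = degree f (swp v).
Proof. exact: (card_swap (fun w => f (swp v) w)). Qed.

Lemma pt_tr a b (f : rel (grid a b)) : symmetric f ->
  forall x y, partial_transpose (tr f) x y = tr (partial_transpose f) x y.
Proof. by move=> Hs x y; rewrite /partial_transpose /tr /swp /= Hs. Qed.

Lemma crit_eq a b (f g : rel (grid a b)) : f =2 g -> degree_criterion f -> degree_criterion g.
Proof.
move=> Hfg Hf v; rewrite /degree.
rewrite (eq_card (B := [pred w | f v w])); last by move=> w; rewrite !inE Hfg.
rewrite [RHS](eq_card (B := [pred w | partial_transpose f v w])); first exact: Hf.
by move=> w; rewrite !inE /partial_transpose Hfg.
Qed.

Lemma crit_tr a b (f : rel (grid a b)) : symmetric f -> degree_criterion f ->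
  degree_criterion (tr f).
Proof.
move=> Hs Hf v; rewrite deg_tr Hf -deg_tr /degree.
by apply: eq_card => w; rewrite !inE pt_tr.
Qed.

Lemma tr_sym a b (f : rel (grid a b)) : symmetric f -> symmetric (tr f).
Proof. by move=> Hs x y; rewrite /tr Hs. Qed.

Lemma crit_tr' a b (f : rel (grid a b)) : symmetric f -> degree_criterion (tr f) ->
  degree_criterion f.
Proof.
move=> Hs Hf; apply: (crit_eq (f := tr (tr f))).
  by move=> x y; rewrite /tr !swpK.
exact: crit_tr (tr_sym Hs) Hf.
Qed.

Lemma row_strip_sym a b (f : rel (grid a b)) i : symmetric f -> symmetric (row_strip f i).
Proof.
move=> Hs x y; rewrite /row_strip /diagonal Hs [x.1 == _]eq_sym [x.2 == _]eq_sym.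
by rewrite [in RHS]orbC.
Qed.

Theorem mainTheorem9 (a b : nat) (e : rel (grid a b)) (He : simple_graph e) :
  (row_stratified e -> degree_criterion e ->
     forall i : nat, i.+1 < a -> degree_criterion (row_strip e i)) /\
  (col_stratified e -> degree_criterion e ->
     forall j : nat, j.+1 < b -> degree_criterion (col_strip e j)).
Proof.
case: He => Hs _; split.
  by move=> Hr Hd i _; apply: row_thm.
move=> Hc Hd j _.
have Hr : row_stratified (tr e).
  move=> x y H1 H2; apply: Hc H1 _.
  by move: H2; rewrite /diagonal /= andbC.
have H := @row_thm b a (tr e) (tr_sym Hs) Hr (crit_tr Hs Hd) j.
apply: (crit_eq (f := tr (row_strip (tr e) j))).
  by move=> x y; rewrite /tr /row_strip /col_strip /diagonal /= !swpK [(_ != _) && _]andbC.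
exact: crit_tr (row_strip_sym j (tr_sym Hs)) H.
Qed.
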